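(* Let $\alpha\subseteq E$, let $\hat{\mathbb{G}},\mathbb{G}$ be $E$-groups and let $h:\hat{\mathbb{G}}[\alpha]\to\mathbb{G}[\alpha]$ be a group homomorphism with $h(e)=e$ for all $e\in\alpha$ whose restriction to $\hat{\mathbb{G}}[\alpha']$ is injective for every $\alpha'\subsetneq\alpha$. If $\mathbb{G}[\alpha]$ is $N$-acyclic (as an $\alpha$-group) for some $N\ge2$, then $\hat{\mathbb{G}}[\alpha]$ is $N$-acyclic.
   Context: Let $E$ be a finite set. An $E$-group is a group $\mathbb{G}$ together with an inclusion $E\subseteq\mathbb{G}$ such that $E$ generates $\mathbb{G}$ and every $e\in E$ satisfies $e\neq1$, $e^2=1$. For $\alpha\subseteq E$, $\mathbb{G}[\alpha]$ is the subgroup generated by $\alpha$, itself an $\alpha$-group. A coset cycle of length $n\ge2$ in an $\alpha$-group $\mathbb{K}$ is a cyclically indexed family $(g_i,\alpha_i)_{i\in\mathbb{Z}_n}$ with $g_i\in\mathbb{K}$, $\alpha_i\subseteq\alpha$, such that for all $i$: $g_{i+1}\in g_i\mathbb{K}[\alpha_i]$ and $g_i\mathbb{K}[\alpha_i\cap\alpha_{i-1}]\cap g_{i+1}\mathbb{K}[\alpha_i\cap\alpha_{i+1}]=\emptyset$. $\mathbb{K}$ is $N$-acyclic if it admits no coset cycle of length $n$ with $2\le n\le N$. *)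

(* Defs.v *)
From mathcomp Require Import all_boot.

Set Implicit Arguments.
Unset Strict Implicit.
Unset Printing Implicit Defensive.

Record group := Group {
  carrier :> Type;
  gmul : carrier -> carrier -> carrier;
  gone : carrier;
  ginv : carrier -> carrier;
  gmulA : forall x y z, gmul x (gmul y z) = gmul (gmul x y) z;
  gmul1g : forall x, gmul gone x = x;
  gmulVg : forall x, gmul (ginv x) x = gone
}.

Inductive span (G : group) (S : G -> Prop) : G -> Prop :=
| span_gen x : S x -> span S x
| span_one : span S (gone G)
| span_mul x y : span S x -> span S y -> span S (gmul x y)
| span_inv x : span S x -> span S (ginv x).

Record Egroup (E : finType) := EGroup {
  egrp :> group;
  emb : E -> egrp;
  emb_inj : injective emb;
  emb_gen : forall x, span (fun y => exists e, y = emb e) x;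
  emb_ne1 : forall e, emb e <> gone egrp;
  emb_inv : forall e, gmul (emb e) (emb e) = gone egrp
}.

Definition gen (E : finType) (G : Egroup E) (a : {set E}) : G -> Prop :=
  span (fun y => exists2 e, e \in a & y = emb G e).
Arguments gen {E} G a _.

Definition in_coset (E : finType) (G : Egroup E) (g : G) (b : {set E}) (x : G) : Prop :=
  exists2 k, gen G b k & x = gmul g k.

Definition coset_cycle (E : finType) (G : Egroup E) (alpha : {set E}) (n : nat)
    (g : 'I_n -> G) (a : 'I_n -> {set E}) : Prop :=
  [/\ forall i, gen G alpha (g i),
      forall i, a i \subset alpha,
      forall i, in_coset (g i) (a i) (g (ordS i)) &
      forall i x, ~ (in_coset (g i) (a i :&: a (ord_pred i)) x /\
                     in_coset (g (ordS i)) (a i :&: a (ordS i)) x)].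
Arguments coset_cycle {E} G alpha {n} g a.

Definition N_acyclic (E : finType) (G : Egroup E) (alpha : {set E}) (N : nat) : Prop :=
  forall n, 2 <= n <= N ->
  forall (g : 'I_n -> G) (a : 'I_n -> {set E}), ~ coset_cycle G alpha g a.

(* Main.v *)
Require Import Defs.
From mathcomp Require Import all_boot.

Section GroupFacts.
Variable G : group.
Lemma gmulgV (x : G) : gmul x (ginv x) = gone G.
Proof.
set y := ginv x.
rewrite -[gmul x y]gmul1g -(gmulVg y) -gmulA [gmul y (gmul x y)]gmulA.
by rewrite /y gmulVg gmul1g.
Qed.
Lemma gmulg1 (x : G) : gmul x (gone G) = x.
Proof. by rewrite -(gmulVg x) gmulA gmulgV gmul1g. Qed.
Lemma gcancel (z x y : G) : gmul z x = gmul z y -> x = y.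
Proof.
move=> H. by rewrite -[x]gmul1g -[y]gmul1g -(gmulVg z) -!gmulA H.
Qed.
Lemma ginv_uniq (a b : G) : gmul a b = gone G -> a = ginv b.
Proof.
move=> H. by rewrite -[a]gmulg1 -(gmulgV b) gmulA H gmul1g.
Qed.
End GroupFacts.

Lemma gen_mono (E : finType) (G : Egroup E) (a b : {set E}) x :
  a \subset b -> gen G a x -> gen G b x.
Proof.
move=> sab; elim=> [y [e ea ->]| |y z _ Hy _ Hz|y _ Hy].
- by apply: span_gen; exists e => //; apply: (subsetP sab).
- exact: span_one.
- exact: span_mul.
- exact: span_inv.
Qed.

Lemma no_full (E : finType) (G : Egroup E) alpha n (g : 'I_n -> G) a :
  coset_cycle G alpha g a -> forall i, a i <> alpha.
Proof.
case=> _ H2 H3 H4 i Hi.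
set j := ordS i.
apply: (H4 j (g (ordS j))); split.
- rewrite /j ordSK Hi.
  have -> : a (ordS i) :&: alpha = a (ordS i) by apply/setIidPl; apply: H2.
  exact: H3.
- exists (gone G); first exact: span_one.
  by rewrite gmulg1.
Qed.

Theorem mainTheorem7 (E : finType) (alpha : {set E}) (Gh G : Egroup E)
    (h : Gh -> G)
    (h_into : forall x, gen Gh alpha x -> gen G alpha (h x))
    (h_morph : forall x y, gen Gh alpha x -> gen Gh alpha y ->
                 h (gmul x y) = gmul (h x) (h y))
    (h_fix : forall e, e \in alpha -> h (emb Gh e) = emb G e)
    (h_inj : forall alpha' : {set E}, alpha' \proper alpha ->
               forall x y, gen Gh alpha' x -> gen Gh alpha' y -> h x = h y -> x = y)
    (N : nat) (HN : 2 <= N) :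
  N_acyclic G alpha N -> N_acyclic Gh alpha N.
Proof.
have h1 : h (gone Gh) = gone G.
  have := @h_morph (gone Gh) (gone Gh) (span_one _) (span_one _).
  rewrite gmul1g => H.
  apply: (@gcancel _ (h (gone Gh))). by rewrite -H gmulg1.
have hinv : forall x, gen Gh alpha x -> h (ginv x) = ginv (h x).
  move=> x Hx; apply: ginv_uniq.
  by rewrite -h_morph ?gmulVg //; apply: span_inv.
have himg : forall b : {set E}, b \subset alpha -> forall x, gen Gh b x -> gen G b (h x).
  move=> b sb x; elim=> [y [e eb ->]| |y z Gy Hy Gz Hz|y Gy Hy].
  - rewrite h_fix; last exact: (subsetP sb).
    by apply: span_gen; exists e.
  - rewrite h1; exact: span_one.
  - rewrite h_morph; [exact: span_mul| exact: gen_mono Gy|exact: gen_mono Gz].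
  - rewrite hinv; [exact: span_inv| exact: gen_mono Gy].
have hsurj : forall b : {set E}, b \subset alpha -> forall y, gen G b y ->
    exists2 x, gen Gh b x & h x = y.
  move=> b sb y; elim=> [y' [e eb ->]| |y1 z _ [x1 G1 <-] _ [x2 G2 <-]|y' _ [x G1 <-]].
  - exists (emb Gh e); first by apply: span_gen; exists e.
    by rewrite h_fix //; apply: (subsetP sb).
  - by exists (gone Gh); [exact: span_one|].
  - exists (gmul x1 x2); first exact: span_mul.
    by rewrite h_morph //; apply: gen_mono G1 || apply: gen_mono G2.
  - exists (ginv x); first exact: span_inv.
    by rewrite hinv //; apply: gen_mono G1.
move=> Hac n Hn g a Hcyc.
have Hfull := @no_full _ _ _ _ _ _ Hcyc.
case: Hcyc => H1 H2 H3 H4.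
apply: (Hac n Hn (fun i => h (g i)) a); split => //.
- by move=> i; apply: h_into.
- move=> i; case: (H3 i) => k Hk ->.
  exists (h k); first exact: himg.
  by rewrite h_morph //; apply: gen_mono Hk.
- move=> i x [[u Hu ->] [v Hv Hx]].
  have sI1 : a i :&: a (ord_pred i) \subset a i by apply: subsetIl.
  have sI2 : a i :&: a (ordS i) \subset a i by apply: subsetIl.
  have sa := H2 i.
  case: (hsurj _ (subset_trans sI1 sa) _ Hu) => u' Hu' Eu.
  case: (hsurj _ (subset_trans sI2 sa) _ Hv) => v' Hv' Ev.
  case: (H3 i) => k Hk Ek.
  have pr : a i \proper alpha by rewrite properEneq sa andbT; apply/eqP.
  have Gk : gen Gh alpha k by apply: gen_mono Hk.
  have Gu : gen Gh alpha u' by apply: gen_mono Hu'; apply: subset_trans sI1 sa.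
  have Gv : gen Gh alpha v' by apply: gen_mono Hv'; apply: subset_trans sI2 sa.
  have Euv : u' = gmul k v'.
    apply: (h_inj _ pr).
    + exact: gen_mono Hu'.
    + by apply: span_mul => //; apply: gen_mono Hv'.
    apply: (@gcancel _ (h (g i))).
    rewrite Eu Hx h_morph // Ev Ek h_morph // ?gmulA //.
  apply: (H4 i (gmul (g i) u')); split.
  + by exists u'.
  + exists v' => //. by rewrite Euv Ek gmulA.
Qed.
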